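(* Let $G=(m,n,\boldsymbol{c},\boldsymbol{d},r_{\max},r_{\min})$ be an interbank lending game. Then the continuous-time best-response dynamics $$\frac{ds_i(t)}{dt}=\hat s_i(t)-s_i(t),\qquad \hat s_i(t)\in\mathrm{BR}_i(\boldsymbol{s}(t)),\qquad i\in L,$$ converges to the unique pure Nash equilibrium $\boldsymbol{s}^*$ of $G$ from any initial state $\boldsymbol{s}(0)\in\boldsymbol{S}$, i.e. $\boldsymbol{s}(t)\to\boldsymbol{s}^*$ as $t\to\infty$.
   Context: An interbank lending game $G=(m,n,\boldsymbol{c},\boldsymbol{d},r_{\max},r_{\min})$ consists of positive integers $m,n$, budgets $\boldsymbol{c}\in\mathbb{R}_{>0}^m$, demands $\boldsymbol{d}\in\mathbb{R}_{>0}^n$ and reals $0<r_{\min}<r_{\max}$. The players are the lenders $L=\{1,\dots,m\}$; $B=\{1,\dots,n\}$ is the set of borrowers. Lender $i$'s strategy set is $S_i=\{s_i\in\mathbb{R}_{\ge0}^n:\sum_{j\in B}s_{ij}\le c_i\}$, the strategy space is $\boldsymbol{S}=\prod_{i\in L}S_i$ with elements $\boldsymbol{s}=(s_{ij})$. The interest rate of borrower $j$ is $r_j(\boldsymbol{s})=(r_{\min}-r_{\max})\frac{\sum_{i\in L}s_{ij}}{d_j}+r_{\max}$ and lender $i$'s utility is $u_i(\boldsymbol{s})=\sum_{j\in B}(r_j(\boldsymbol{s})-r_{\min})s_{ij}$. A pure Nash equilibrium is $\boldsymbol{s}^*\in\boldsymbol{S}$ with $u_i(\boldsymbol{s}^*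 )\ge u_i(s_i,\boldsymbol{s}^*_{-i})$ for all $i\in L$, $s_i\in S_i$; $G$ has exactly one. Lender $i$'s best-response set at $\boldsymbol{s}$ is $\mathrm{BR}_i(\boldsymbol{s})=\arg\max\{u_i(z_i,\boldsymbol{s}_{-i}):z_i\in S_i\}$; in these games it is a singleton for every $\boldsymbol{s}\in\boldsymbol{S}$, so the dynamics above is an ordinary differential equation. *)

(* Defs.v *)
From HB Require Import structures.
From mathcomp Require Import all_boot all_order all_algebra.
From mathcomp Require Import all_classical all_reals all_analysis.
Set Implicit Arguments. Unset Strict Implicit. Unset Printing Implicit Defensive.
Import Order.TTheory GRing.Theory Num.Theory.
Import numFieldNormedType.Exports.
Local Open Scope ring_scope.

Section IBL.
Variables (R : realType) (m n : nat).

(* A strategy profile s : lender i lends s i j to borrower j. *)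
Definition profile := 'I_m -> 'I_n -> R.

Definition rate (d : 'I_n -> R) (rmax rmin : R) (s : profile) (j : 'I_n) : R :=
  (rmin - rmax) * ((\sum_(i < m) s i j) / d j) + rmax.

Definition utility (d : 'I_n -> R) (rmax rmin : R) (i : 'I_m) (s : profile) : R :=
  \sum_(j < n) (rate d rmax rmin s j - rmin) * s i j.

Definition in_Si (c : 'I_m -> R) (i : 'I_m) (x : 'I_n -> R) : Prop :=
  (forall j, 0 <= x j) /\ \sum_(j < n) x j <= c i.

Definition in_S (c : 'I_m -> R) (s : profile) : Prop :=
  forall i, in_Si c i (s i).

Definition upd (s : profile) (i : 'I_m) (z : 'I_n -> R) : profile :=
  fun k => if k == i then z else s k.

Definition is_BR (c : 'I_m -> R) (d : 'I_n -> R) (rmax rmin : R)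
    (s : profile) (i : 'I_m) (x : 'I_n -> R) : Prop :=
  in_Si c i x /\
  forall z, in_Si c i z ->
    utility d rmax rmin i (upd s i z) <= utility d rmax rmin i (upd s i x).

Definition is_PNE (c : 'I_m -> R) (d : 'I_n -> R) (rmax rmin : R)
    (s : profile) : Prop :=
  in_S c s /\
  forall i z, in_Si c i z ->
    utility d rmax rmin i (upd s i z) <= utility d rmax rmin i s.

End IBL.

(* Main.v *)
Require Import Defs.
From HB Require Import structures.
From mathcomp Require Import all_boot all_order all_algebra.
From mathcomp Require Import all_classical all_reals all_analysis.
From mathcomp Require Import ring lra.
Import Order.TTheory GRing.Theory Num.Theory.
Import numFieldNormedType.Exports.
Local Open Scope classical_set_scope.
Local Open Scope ring_scope.
Set Implicit Arguments. Unset Strict Implicit. Unset Printing Implicit Defensive.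

Section An.
Variable R : realType.
Implicit Types (df dg t a : R).

Lemma derM (f g : R -> R) df dg t : is_derive t 1 f df -> is_derive t 1 g dg ->
  is_derive t 1 (fun u => f u * g u) (f t * dg + g t * df).
Proof. move=> hf hg; exact: (is_deriveM hf hg). Qed.

Lemma derD (f g : R -> R) df dg t : is_derive t 1 f df -> is_derive t 1 g dg ->
  is_derive t 1 (fun u => f u + g u) (df + dg).
Proof. move=> hf hg; exact: (is_deriveD hf hg). Qed.

Lemma derN (f : R -> R) df t : is_derive t 1 f df ->
  is_derive t 1 (fun u => - f u) (- df).
Proof. move=> hf; exact: (is_deriveN hf). Qed.

Lemma derC (a : R) t : is_derive t 1 (fun _ => a) 0.
Proof. exact: is_derive_cst. Qed.

Lemma derSum N (f : 'I_N -> R -> R) (df : 'I_N -> R) t : (forall k, is_derive t 1 (f k) (df k)) ->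
  is_derive t 1 (fun u => \sum_(k < N) f k u) (\sum_(k < N) df k).
Proof.
move=> hf; have := is_derive_sum hf.
by rewrite (_ : \sum_(k < N) f k = (fun u => \sum_(k < N) f k u)) // funeqE => u; rewrite fct_sumE.
Qed.

Lemma mono (f : R -> R) (df : R -> R) a : (forall u, a < u -> is_derive u 1 f (df u)) ->
  (forall u, a < u -> 0 <= df u) -> forall x y, a < x -> x <= y -> f x <= f y.
Proof.
move=> hd hs x y ax; rewrite le_eqVlt => /predU1P[-> //|xy].
have cont : {within `[x, y], continuous f}.
  apply: continuous_in_subspaceT => u; rewrite inE /= in_itv /= => /andP[xu _].
  have au : a < u by apply: lt_le_trans xu.
  have hdu := hd u au; have : derivable f u 1 by []. move/derivable1_diffP/differentiable_continuous.
  done.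
have az z : z \in `]x, y[ -> a < z.
  by move=> zin; apply: lt_trans ax _; rewrite (itvP zin).
have [z zxy E] := MVT xy (fun z zin => hd z (az z zin)) cont.
rewrite -subr_ge0 E mulr_ge0 ?subr_ge0 ?(ltW xy) //.
exact/hs/az.
Qed.

Lemma mono2 (f : R -> R) a : (forall u, a < u -> exists2 dfu, 0 <= dfu & is_derive u 1 f dfu) ->
  forall x y, a < x -> x <= y -> f x <= f y.
Proof.
move=> h.
have ex : forall u, exists dfu : R, a < u -> 0 <= dfu /\ is_derive u 1 f dfu.
  move=> u; case: (ltP a u) => au; last by exists 0.
  by have [dfu ? ?] := h u au; exists dfu.
have [df hdf] := choice ex.
apply: (@mono f df) => u au; by have [] := hdf u au.
Qed.

Lemma stay_ge (x : R -> R) (L : R) : x u @[u --> 0^'+] --> x 0 -> L <= x 0 ->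
  (forall u : R, 0 < u -> exists yu : R, L <= yu /\ is_derive u 1 x (yu - x u)) ->
  forall t : R, 0 < t -> L <= x t.
Proof.
move=> hc hL hd t t0.
pose f u := expR u * (x u - L).
have fm : forall u v, 0 < u -> u <= v -> f u <= f v.
  apply: mono2 => u u0; have [yu [Ly dx]] := hd u u0.
  exists (expR u * (yu - L)); first by rewrite mulr_ge0 ?expR_ge0 ?subr_ge0.
  have := derM (is_derive_expR u) (derD dx (derC (- L) u)).
  move=> H; have -> : expR u * (yu - L) = expR u * (yu - x u + 0) + (x u - L) * expR u by ring.
  exact: H.
have lim0 : f u @[u --> 0^'+] --> f 0.
  apply: cvgM; last by apply: cvgB => //; exact: cvg_cst.
  apply: cvg_within_filter; exact: continuous_expR.
have : f 0 <= f t.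
  apply: (ler_cvg_to lim0 (cvg_cst (f t))).
  near=> w; apply: fm; [near: w; exact: nbhs_right_gt|near: w; exact: nbhs_right_le].
rewrite /f expR0 mul1r => H.
have : 0 <= expR t * (x t - L) by apply: le_trans H; rewrite subr_ge0.
by rewrite pmulr_rge0 ?expR_gt0 // subr_ge0.
Unshelve. all: end_near.
Qed.

Lemma derSq (f : R -> R) df t : is_derive t 1 f df ->
  is_derive t 1 (fun u => f u ^+ 2) (2 * f t * df).
Proof.
move=> hf; have H := derM hf hf.
have -> : 2 * f t * df = f t * df + f t * df by ring.
exact: H.
Qed.

Lemma derB (f g : R -> R) df dg t : is_derive t 1 f df -> is_derive t 1 g dg ->
  is_derive t 1 (fun u => f u - g u) (df - dg).
Proof. move=> hf hg; exact: (derD hf (derN hg)). Qed.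

Lemma derDivc (f : R -> R) df t (k : R) : is_derive t 1 f df ->
  is_derive t 1 (fun u => f u / k) (df / k).
Proof.
move=> hf; have H := derM hf (derC k^-1 t).
have -> : df / k = f t * 0 + k^-1 * df by ring.
exact: H.
Qed.
End An.

Section Alg.
Variables (R : realType) (m n : nat) (d : 'I_n -> R).
Hypothesis hd : forall j, 0 < d j.
Local Notation prof := (profile R m n).

Definition colsum (s : prof) j := \sum_(i < m) s i j.
Definition grad (s : prof) i j := 1 - (colsum s j + s i j) / d j.
Definition Pot (s : prof) := \sum_(j < n)
  (colsum s j - (colsum s j ^+ 2 + \sum_(i < m) s i j ^+ 2) / (2 * d j)).
Definition padd (s e : prof) : prof := fun i j => s i j + e i j.
Definition Phi (s : prof) i (z : 'I_n -> R) :=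
  \sum_(j < n) (grad s i j * (z j - s i j) - (z j - s i j) ^+ 2 / d j).

Lemma dne0 j : d j != 0. Proof. by rewrite gt_eqF. Qed.

Lemma sum_grad (s e : prof) j : \sum_(i < m) grad s i j * e i j =
  colsum e j - (colsum s j * colsum e j + \sum_(i < m) s i j * e i j) / d j.
Proof.
rewrite (eq_bigr (fun i => e i j - (colsum s j * e i j + s i j * e i j) / d j)); last first.
  by move=> i _; rewrite /grad; field; rewrite dne0.
rewrite sumrB -mulr_suml big_split /= -mulr_sumr //.
Qed.

Lemma quad (s e : prof) : Pot (padd s e) - Pot s =
  \sum_(i < m) \sum_(j < n) grad s i j * e i j
  - \sum_(j < n) (colsum e j ^+ 2 + \sum_(i < m) e i j ^+ 2) / (2 * d j).
Proof.
rewrite /Pot exchange_big /= -!sumrB; apply: eq_bigr => j _.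
rewrite sum_grad.
have c1 : colsum (padd s e) j = colsum s j + colsum e j by rewrite /colsum /padd big_split.
have c2 : \sum_(i < m) padd s e i j ^+ 2 = \sum_(i < m) s i j ^+ 2
   + 2 * \sum_(i < m) s i j * e i j + \sum_(i < m) e i j ^+ 2.
  rewrite /padd mulr_sumr -!big_split /=; apply: eq_bigr => i _; ring.
rewrite c1 c2; field; exact: dne0.
Qed.

Lemma util_Phi rmax rmin (s : prof) i (z : 'I_n -> R) :
  utility d rmax rmin i (upd s i z) - utility d rmax rmin i s = (rmax - rmin) * Phi s i z.
Proof.
rewrite /utility /Phi -sumrB mulr_sumr; apply: eq_bigr => j _.
rewrite /rate /grad /colsum.
rewrite (bigD1 i) //= (bigD1 i (P := xpredT)) //=.
rewrite (eq_bigr (fun k => s k j) (P := fun k => k != i)); last first.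
  by move=> k /negPf ki; rewrite /upd ki.
rewrite /upd eqxx.
field; exact: dne0.
Qed.

Lemma Phi_le_lin (s : prof) i z : Phi s i z <= \sum_(j < n) grad s i j * (z j - s i j).
Proof.
apply: ler_sum => j _; rewrite lerBlDr lerDl divr_ge0 ?sqr_ge0 //; exact: ltW.
Qed.

Lemma Phi_conv (s : prof) i (y : 'I_n -> R) th :
  Phi s i (fun j => s i j + th * (y j - s i j)) =
  th * \sum_(j < n) grad s i j * (y j - s i j) - th ^+ 2 * \sum_(j < n) (y j - s i j) ^+ 2 / d j.
Proof.
rewrite /Phi !mulr_sumr -sumrB; apply: eq_bigr => j _; field; exact: dne0.
Qed.

Lemma in_Si_conv (c : 'I_m -> R) i (x y : 'I_n -> R) th :
  in_Si c i x -> in_Si c i y -> 0 <= th -> th <= 1 ->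
  in_Si c i (fun j => x j + th * (y j - x j)).
Proof.
move=> [x0 xc] [y0 yc] t0 t1; split.
  move=> j; have := x0 j; have := y0 j; nra.
rewrite big_split /= -mulr_sumr sumrB; nra.
Qed.

Lemma BR_Phi (c : 'I_m -> R) rmax rmin (s : prof) i b y : rmin < rmax ->
  is_BR c d rmax rmin s i b -> in_Si c i y -> Phi s i y <= Phi s i b.
Proof.
move=> hr [_ H] /H hy.
have a0 : 0 < rmax - rmin by rewrite subr_gt0.
rewrite -(ler_pM2l a0) -!util_Phi; exact: lerB.
Qed.

Lemma NE_Phi (c : 'I_m -> R) rmax rmin (s : prof) i y : rmin < rmax ->
  is_PNE c d rmax rmin s -> in_Si c i y -> Phi s i y <= 0.
Proof.
move=> hr [_ H] /H hy.
have a0 : 0 < rmax - rmin by rewrite subr_gt0.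
by rewrite -(ler_pM2l a0) mulr0 -util_Phi subr_le0.
Qed.

Lemma padd_sub (s ss : prof) : padd s (fun i j => ss i j - s i j) = ss.
Proof. by apply/funext => i; apply/funext => j; rewrite /padd addrC subrK. Qed.

Lemma quad_le (s ss : prof) :
  Pot ss - Pot s <= \sum_(i < m) \sum_(j < n) grad s i j * (ss i j - s i j)
     - (\sum_(i < m) \sum_(j < n) (ss i j - s i j) ^+ 2 / d j) / 2.
Proof.
rewrite -{1}(padd_sub s ss) quad lerD2l lerN2.
rewrite exchange_big /= mulr_suml; apply: ler_sum => j _.
rewrite [X in _ <= X]mulrDl.
rewrite -mulr_suml.
set X := \sum_(i < m) _.
have -> : X / d j / 2 = X / (2 * d j) by field; exact: dne0.
rewrite lerDr; apply: divr_ge0; first exact: sqr_ge0.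
by rewrite mulr_ge0 // ltW.
Qed.

Lemma key_ineq (c : 'I_m -> R) rmax rmin (s ss : prof) (b : 'I_m -> 'I_n -> R) :
  rmin < rmax -> in_S c s -> in_S c ss -> (forall i, is_BR c d rmax rmin s i (b i)) ->
  (Pot ss - Pot s) / 2 <= \sum_(i < m) \sum_(j < n) grad s i j * (b i j - s i j).
Proof.
move=> hr hs hss hb.
have step i : 2^-1 * \sum_(j < n) grad s i j * (ss i j - s i j)
   - 2^-1 ^+ 2 * \sum_(j < n) (ss i j - s i j) ^+ 2 / d j
   <= \sum_(j < n) grad s i j * (b i j - s i j).
  rewrite -Phi_conv; apply: le_trans (Phi_le_lin _ _ _).
  apply: BR_Phi hr (hb i) _; apply: in_Si_conv => //; lra.
have H : \sum_(i < m) (2^-1 * \sum_(j < n) grad s i j * (ss i j - s i j) - 2^-1 ^+ 2 * \sum_(j < n) (ss i j - s i j) ^+ 2 / d j) <= \sum_(i < m) \sum_(j < n) grad s i j * (b i j - s i j).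
  by apply: ler_sum => i _; exact: step.
move: H; rewrite sumrB -!mulr_sumr => H; apply: le_trans H.
have := quad_le s ss; lra.
Qed.

Lemma NE_ineq (c : 'I_m -> R) rmax rmin (s ss : prof) :
  rmin < rmax -> in_S c s -> is_PNE c d rmax rmin ss ->
  (\sum_(i < m) \sum_(j < n) (s i j - ss i j) ^+ 2 / d j) / 2 <= Pot ss - Pot s.
Proof.
move=> hr hs hne.
have hss := hne.1.
have A0 i : \sum_(j < n) grad ss i j * (s i j - ss i j) <= 0.
  set A := \sum_(j < n) _; set B := \sum_(j < n) (s i j - ss i j) ^+ 2 / d j.
  have B0 : 0 <= B by apply: sumr_ge0 => j _; rewrite divr_ge0 ?sqr_ge0 // ltW.
  case: (lerP A 0) => // Apos.
  have AB : 0 < A + B by lra.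
  set th := A / (A + B).
  have th0 : 0 <= th by rewrite divr_ge0 // ltW.
  have th1 : th <= 1 by rewrite ler_pdivrMr // mul1r; lra.
  have := NE_Phi hr hne (in_Si_conv (hss i) (hs i) th0 th1).
  rewrite Phi_conv -/A -/B.
  have -> : th * A - th ^+ 2 * B = A ^+ 3 / (A + B) ^+ 2.
    by rewrite /th; field; rewrite gt_eqF.
  rewrite pmulr_rle0 ?exprn_gt0 // => H.
  have : 0 < (A + B) ^- 2 by rewrite invr_gt0 exprn_gt0.
  lra.
have := quad_le ss s.
have : \sum_(i < m) \sum_(j < n) grad ss i j * (s i j - ss i j) <= 0.
  apply: (le_trans (y := \sum_(i < m) (0:R))); first by apply: ler_sum => i _; exact: A0.
  by rewrite big1.
lra.
Qed.

Lemma dPot (traj : R -> prof) (t : R) (e : prof) :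
  (forall i j, is_derive t 1 (fun u => traj u i j) (e i j)) ->
  is_derive t 1 (fun u => Pot (traj u)) (\sum_(i < m) \sum_(j < n) grad (traj t) i j * e i j).
Proof.
move=> he.
have hC j : is_derive t 1 (fun u => colsum (traj u) j) (colsum e j).
  exact: (derSum (fun i => he i j)).
have hS j : is_derive t 1 (fun u => \sum_(i < m) traj u i j ^+ 2)
    (\sum_(i < m) 2 * traj t i j * e i j).
  exact: (derSum (fun i => derSq (he i j))).
have H := derSum (fun j => derB (hC j) (derDivc (2 * d j) (derD (derSq (hC j)) (hS j)))).
rewrite exchange_big /=.
have -> : \sum_(j < n) \sum_(i < m) grad (traj t) i j * e i j =
  \sum_(j < n) (colsum e j - (2 * colsum (traj t) j * colsum e j +
      \sum_(i < m) 2 * traj t i j * e i j) / (2 * d j)).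
  apply: eq_bigr => j _; rewrite sum_grad.
  under [X in _ = _ - (_ + X) / _]eq_bigr => i _ do rewrite -mulrA.
  rewrite -mulr_sumr; field; exact: dne0.
exact: H.
Qed.

Lemma term_le_sum (F : 'I_m -> 'I_n -> R) i j : (forall i j, 0 <= F i j) ->
  F i j <= \sum_(i < m) \sum_(j < n) F i j.
Proof.
move=> F0; rewrite (bigD1 i) //= (bigD1 j) //= -addrA lerDl.
apply: addr_ge0; apply: sumr_ge0 => k _ //; apply: sumr_ge0 => l _ //.
Qed.
End Alg.

Lemma derId (R : realType) (t : R) : is_derive t 1 (fun u : R => u) 1.
Proof. exact: is_derive_id. Qed.


Unset Implicit Arguments.

Theorem theorem4p8 (R : realType) (m n : nat)
    (c : 'I_m -> R) (d : 'I_n -> R) (rmax rmin : R)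
    (hm : (0 < m)%N) (hn : (0 < n)%N)
    (hc : forall i, 0 < c i) (hd : forall j, 0 < d j)
    (hrmin : 0 < rmin) (hr : rmin < rmax)
    (sstar : profile R m n)
    (hNE : is_PNE c d rmax rmin sstar)
    (traj : R -> profile R m n)
    (h0 : in_S c (traj 0))
    (hcont0 : forall i j, traj t i j @[t --> 0^'+] --> traj 0 i j)
    (hode : forall t, 0 < t -> forall i : 'I_m,
       exists shat : 'I_n -> R,
         is_BR c d rmax rmin (traj t) i shat /\
         forall j : 'I_n,
           is_derive t 1 (fun u => traj u i j) (shat j - traj t i j)) :
  forall i j, traj t i j @[t --> +oo] --> sstar i j.
Proof.
have inS : forall t, 0 < t -> in_S c (traj t).
  move=> t t0 i; split.
    move=> j.
    apply: (@stay_ge R (fun u => traj u i j) 0 (hcont0 i j) ((h0 i).1 j) _ t t0).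
    move=> u u0; have [sh [[[sh0 _] _] dsh]] := hode u u0 i.
    by exists (sh j); split; [exact: sh0 | exact: dsh].
  have hc1 : (- \sum_(j < n) traj u i j) @[u --> 0^'+] --> - \sum_(j < n) traj 0 i j.
    apply: cvgN; apply: cvg_big => //; first exact: add_continuous.
  have hL1 : - c i <= - \sum_(j < n) traj 0 i j by rewrite lerN2; exact: (h0 i).2.
  have hd1 : forall u : R, 0 < u -> exists yu : R, - c i <= yu /\
      is_derive u 1 (fun u => - \sum_(j < n) traj u i j) (yu - - \sum_(j < n) traj u i j).
    move=> u u0; have [sh [[[_ shc] _] dsh]] := hode u u0 i.
    exists (- \sum_(j < n) sh j); split; first by rewrite lerN2.
    have H := derN (derSum (fun j => dsh j)).
    have -> : - \sum_(j < n) sh j - - \sum_(j < n) traj u i j =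
              - \sum_(j < n) (sh j - traj u i j) by rewrite sumrB; ring.
    exact: H.
  have := @stay_ge R (fun u => - \sum_(j < n) traj u i j) (- c i) hc1 hL1 hd1 t t0.
  by rewrite lerN2.
pose E t := Pot d sstar - Pot d (traj t).
have E0 t : 0 < t -> 0 <= E t.
  move=> t0; apply: le_trans (NE_ineq hd hr (inS t t0) hNE).
  apply: divr_ge0 => //; apply: sumr_ge0 => i _; apply: sumr_ge0 => j _.
  by rewrite divr_ge0 ?sqr_ge0 // ltW.
pose F u := u * (Pot d (traj u) - Pot d sstar).
have Fm : forall x y, 2 < x -> x <= y -> F x <= F y.
  apply: mono2 => u u2.
  have u0 : 0 < u by apply: lt_trans u2.
  have [b hb] := choice (hode u u0).
  have dP := dPot hd (fun i j => (hb i).2 j).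
  set G := \sum_(i < m) \sum_(j < n) _ in dP.
  have key := key_ineq hd hr (inS u u0) hNE.1 (fun i => (hb i).1).
  rewrite -/G in key.
  have e0 := E0 u u0; rewrite /E in e0.
  exists (u * G + (Pot d (traj u) - Pot d sstar)); first by nra.
  have H := derM (derId u) (derB dP (derC (Pot d sstar) u)).
  have -> : u * G + (Pot d (traj u) - Pot d sstar) =
     u * (G - 0) + (Pot d (traj u) - Pot d sstar) * 1 by ring.
  exact: H.
move=> i j.
have E3 t : 3 <= t -> t * E t <= 3 * E 3.
  move=> t3; have : (2:R) < 3 by rewrite ltr_nat.
  move=> h23; have := Fm 3 t h23 t3; rewrite /F /E; lra.
have bnd t : 0 < t -> (traj t i j - sstar i j) ^+ 2 <= 2 * d j * E t.
  move=> t0; have := NE_ineq hd hr (inS t t0) hNE.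
  have := @term_le_sum R m n (fun i j => (traj t i j - sstar i j) ^+ 2 / d j) i j.
  move=> /(_ (fun i j => divr_ge0 (sqr_ge0 _) (ltW (hd j)))) /= h1 h2.
  rewrite -/(E t) in h2.
  have dj := hd j.
  have : (traj t i j - sstar i j) ^+ 2 = d j * ((traj t i j - sstar i j) ^+ 2 / d j).
    by field; exact: dne0.
  move=> ->; set q := (traj t i j - sstar i j) ^+ 2 / d j in h1 *.
  nra.
apply/cvgrPdist_le => eps e0.
set K := 2 * d j * (3 * E 3).
near=> t.
have t3 : 3 <= t by near: t; apply: nbhs_pinfty_ge; exact: num_real.
have tK : K / eps ^+ 2 <= t by near: t; apply: nbhs_pinfty_ge; exact: num_real.
have t0 : 0 < t by apply: lt_le_trans t3.
have e2 : 0 < eps ^+ 2 by rewrite exprn_gt0.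
move: tK; rewrite ler_pdivrMr // => tK.
have h1 := bnd t t0.
have h2 := E3 t t3.
have dj := hd j.
have h3 : t * (traj t i j - sstar i j) ^+ 2 <= t * eps ^+ 2.
  apply: le_trans (_ : 2 * d j * (t * E t) <= _); first nra.
  rewrite /K in tK; nra.
have h4 : (traj t i j - sstar i j) ^+ 2 <= eps ^+ 2 by rewrite -(ler_pM2l t0).
rewrite ler_norml; apply/andP; split; nra.
Unshelve. all: end_near.
Qed.
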